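(* Let $G$ and $H$ be groups and $\varphi\colon G\to \mathrm{Aut}(H)$ an action. Define subgroups of $H$ recursively by $L_1=V_1=H$ and, for $n\geq 2$, $K_n=\langle \varphi(g)(h)h^{-1} : g\in\Gamma_{n-1}(G), h\in H\rangle$, $H_n=\langle \varphi(g)(h)h^{-1} : g\in G, h\in L_{n-1}\rangle$, $\widetilde H_n=\langle \varphi(g)(h)h^{-1} : g\in G, h\in V_{n-1}\rangle$, $L_n=\langle K_n, H_n, [H,L_{n-1}]\rangle$, $V_n=\langle \widetilde H_n, [H,V_{n-1}]\rangle$. Then for every $n\geq 1$, $\varphi$ restricts to an action of $\Gamma_n(G)$ on $L_n$ and of $G^{(n-1)}$ on $V_n$ (by automorphisms), and: (1) $\Gamma_n(H\rtimes_\varphi G)=L_n\rtimes_\varphi \Gamma_n(G)$; (2) $(H\rtimes_\varphi G)^{(n-1)}\subseteq V_n\rtimes_\varphi G^{(n-1)}$.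
   Context: $[x,y]=xyx^{-1}y^{-1}$; for subgroups $A,B$, $[A,B]$ is the subgroup generated by all $[a,b]$. Lower central series: $\Gamma_1(G)=G$, $\Gamma_{i+1}(G)=[\Gamma_i(G),G]$. Derived series: $G^{(0)}=G$, $G^{(i+1)}=[G^{(i)},G^{(i)}]$. In $H\rtimes_\varphi G$ the product is $(h,g)(h',g')=(h\,\varphi(g)(h'),gg')$. *)

(* Defs.v *)
(* groups are arbitrary (possibly infinite), so we
   work with a carrier type and explicit operations; subsets are predicates. *)
Set Implicit Arguments.

Definition full {T : Type} : T -> Prop := fun _ => True.

Definition is_group {T : Type} (mul : T -> T -> T) (inv : T -> T) (one : T) : Prop :=
  (forall x y z, mul x (mul y z) = mul (mul x y) z) /\
  (forall x, mul one x = x) /\ (forall x, mul x one = x) /\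
  (forall x, mul (inv x) x = one) /\ (forall x, mul x (inv x) = one).

Definition comm {T : Type} (mul : T -> T -> T) (inv : T -> T) (x y : T) : T :=
  mul (mul (mul x y) (inv x)) (inv y).

Inductive gen {T : Type} (mul : T -> T -> T) (inv : T -> T) (one : T)
    (S : T -> Prop) : T -> Prop :=
  | gen_base : forall x, S x -> gen mul inv one S x
  | gen_one : gen mul inv one S one
  | gen_mul : forall x y, gen mul inv one S x -> gen mul inv one S y ->
      gen mul inv one S (mul x y)
  | gen_inv : forall x, gen mul inv one S x -> gen mul inv one S (inv x).

Definition commsub {T : Type} (mul : T -> T -> T) (inv : T -> T) (one : T)
    (A B : T -> Prop) : T -> Prop :=
  gen mul inv one (fun z => exists a b, A a /\ B b /\ z = comm mul inv a b).

(* lcs k = Gamma_{k+1}; so Gamma_1 = lcs 0 = whole group *)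
Fixpoint lcs {T : Type} (mul : T -> T -> T) (inv : T -> T) (one : T)
    (k : nat) : T -> Prop :=
  match k with
  | 0 => full
  | S k' => commsub mul inv one (lcs mul inv one k') full
  end.

(* derived k = G^{(k)} *)
Fixpoint derived {T : Type} (mul : T -> T -> T) (inv : T -> T) (one : T)
    (k : nat) : T -> Prop :=
  match k with
  | 0 => full
  | S k' => commsub mul inv one (derived mul inv one k') (derived mul inv one k')
  end.

Definition is_hom {T : Type} (mul : T -> T -> T) (f : T -> T) : Prop :=
  forall x y, f (mul x y) = mul (f x) (f y).

Definition bijective_fun {T : Type} (f : T -> T) : Prop :=
  (forall x y, f x = f y -> x = y) /\ (forall y, exists x, f x = y).

Definition is_action {G H : Type} (mulG : G -> G -> G) (oneG : G)
    (mulH : H -> H -> H) (phi : G -> H -> H) : Prop :=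
  (forall g, is_hom mulH (phi g) /\ bijective_fun (phi g)) /\
  (forall h, phi oneG h = h) /\
  (forall g g' h, phi (mulG g g') h = phi g (phi g' h)).

Definition twset {G H : Type} (mulH : H -> H -> H) (invH : H -> H)
    (phi : G -> H -> H) (A : G -> Prop) (B : H -> Prop) : H -> Prop :=
  fun z => exists g h, A g /\ B h /\ z = mulH (phi g h) (invH h).

(* Lseq k = L_{k+1}:  L_1 = H,
   L_n = < K_n, H_n, [H, L_{n-1}] >  with
   K_n = < phi(g)(h)h^-1 : g in Gamma_{n-1}(G), h in H >,
   H_n = < phi(g)(h)h^-1 : g in G, h in L_{n-1} > *)
Fixpoint Lseq {G H : Type} (mulG : G -> G -> G) (invG : G -> G) (oneG : G)
    (mulH : H -> H -> H) (invH : H -> H) (oneH : H) (phi : G -> H -> H)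
    (k : nat) : H -> Prop :=
  match k with
  | 0 => full
  | S k' =>
      let Lprev := Lseq mulG invG oneG mulH invH oneH phi k' in
      gen mulH invH oneH (fun x =>
        gen mulH invH oneH (twset mulH invH phi (lcs mulG invG oneG k') full) x \/
        gen mulH invH oneH (twset mulH invH phi full Lprev) x \/
        commsub mulH invH oneH full Lprev x)
  end.

(* Vseq k = V_{k+1}:  V_1 = H,  V_n = < Ht_n, [H, V_{n-1}] > with
   Ht_n = < phi(g)(h)h^-1 : g in G, h in V_{n-1} > *)
Fixpoint Vseq {G H : Type} (mulH : H -> H -> H) (invH : H -> H) (oneH : H)
    (phi : G -> H -> H) (k : nat) : H -> Prop :=
  match k with
  | 0 => full
  | S k' =>
      let Vprev := Vseq mulH invH oneH phi k' in
      gen mulH invH oneH (fun x =>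
        gen mulH invH oneH (twset mulH invH phi full Vprev) x \/
        commsub mulH invH oneH full Vprev x)
  end.

Definition sd_mul {G H : Type} (mulG : G -> G -> G) (mulH : H -> H -> H)
    (phi : G -> H -> H) (p q : H * G) : H * G :=
  (mulH (fst p) (phi (snd p) (fst q)), mulG (snd p) (snd q)).
Definition sd_inv {G H : Type} (invG : G -> G) (invH : H -> H)
    (phi : G -> H -> H) (p : H * G) : H * G :=
  (phi (invG (snd p)) (invH (fst p)), invG (snd p)).
Definition sd_one {G H : Type} (oneG : G) (oneH : H) : H * G := (oneH, oneG).

Definition sdset {G H : Type} (A : H -> Prop) (B : G -> Prop) : H * G -> Prop :=
  fun p => A (fst p) /\ B (snd p).

Definition restricts {G H : Type} (phi : G -> H -> H) (B : G -> Prop)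
    (A : H -> Prop) : Prop :=
  forall g, B g ->
    (forall h, A h -> A (phi g h)) /\ (forall h, A h -> exists h', A h' /\ phi g h' = h).

(* Main.v *)
Require Import Defs.
Set Implicit Arguments.

Section Grp.
Variables (T : Type) (m : T -> T -> T) (i : T -> T) (e : T).
Hypothesis hT : is_group m i e.
Lemma g_assoc x y z : m x (m y z) = m (m x y) z.
Proof. apply hT. Qed.
Lemma g_1l x : m e x = x. Proof. apply hT. Qed.
Lemma g_1r x : m x e = x. Proof. apply hT. Qed.
Lemma g_Vl x : m (i x) x = e. Proof. apply hT. Qed.
Lemma g_Vr x : m x (i x) = e. Proof. apply hT. Qed.
Lemma g_KV x y : m x (m (i x) y) = y.
Proof. rewrite g_assoc, g_Vr, g_1l. reflexivity. Qed.
Lemma g_VK x y : m (i x) (m x y) = y.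
Proof. rewrite g_assoc, g_Vl, g_1l. reflexivity. Qed.
Lemma g_uniq x y : m x y = e -> y = i x.
Proof. intro E. rewrite <- (g_VK x y), E, g_1r. reflexivity. Qed.
Lemma g_invinv x : i (i x) = x.
Proof. symmetry. apply g_uniq. apply g_Vl. Qed.
Lemma g_invm x y : i (m x y) = m (i y) (i x).
Proof. symmetry. apply g_uniq. rewrite <- g_assoc, g_KV, g_Vr. reflexivity. Qed.
Lemma g_inv1 : i e = e.
Proof. symmetry. apply g_uniq. apply g_1l. Qed.
End Grp.

Ltac gs hT := repeat progress (rewrite ?(g_invm hT), ?(g_invinv hT), ?(g_inv1 hT);
  rewrite <- ?(g_assoc hT);
  rewrite ?(g_KV hT), ?(g_VK hT), ?(g_Vr hT), ?(g_Vl hT), ?(g_1l hT), ?(g_1r hT)).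

Lemma comm_inv T m i e (hT : is_group m i e) (x y : T) :
  i (comm m i x y) = comm m i y x.
Proof. unfold comm. gs hT. reflexivity. Qed.
Lemma conj_eq T m i e (hT : is_group m i e) (x y : T) :
  m (m x y) (i x) = m (comm m i x y) y.
Proof. unfold comm. gs hT. reflexivity. Qed.

Lemma gen_ind' T (m : T -> T -> T) i e S (P : T -> Prop) :
  P e -> (forall x y, P x -> P y -> P (m x y)) -> (forall x, P x -> P (i x)) ->
  (forall x, S x -> P x) -> forall x, gen m i e S x -> P x.
Proof. intros He Hm Hi Hs x Hx. induction Hx; auto. Qed.
Lemma gen_sub T (m : T -> T -> T) i e S S' :
  (forall x, S x -> gen m i e S' x) -> forall x, gen m i e S x -> gen m i e S' x.
Proof. intro HS. apply gen_ind'; auto; intros; [apply gen_one | apply gen_mul | apply gen_inv]; auto. Qed.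
Lemma gen_mono T (m : T -> T -> T) i e (S S' : T -> Prop) :
  (forall x, S x -> S' x) -> forall x, gen m i e S x -> gen m i e S' x.
Proof. intro HS. apply gen_sub. intros; constructor; auto. Qed.
Section Main.
Variables (G H : Type) (mulG : G -> G -> G) (invG : G -> G) (oneG : G)
  (mulH : H -> H -> H) (invH : H -> H) (oneH : H).
Hypotheses (hG : is_group mulG invG oneG) (hH : is_group mulH invH oneH).
Variable phi : G -> H -> H.
Hypothesis hphi : is_action mulG oneG mulH phi.

Local Notation Gam := (lcs mulG invG oneG).
Local Notation Der := (derived mulG invG oneG).
Local Notation Lk := (Lseq mulG invG oneG mulH invH oneH phi).
Local Notation Vk := (Vseq mulH invH oneH phi).
Local Notation commH := (comm mulH invH).
Local Notation commG := (comm mulG invG).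
Local Notation sdm := (sd_mul mulG mulH phi).
Local Notation sdi := (sd_inv invG invH phi).
Local Notation sde := (sd_one oneG oneH).
Local Notation tw g h := (mulH (phi g h) (invH h)).

Lemma phi_hom g x y : phi g (mulH x y) = mulH (phi g x) (phi g y).
Proof. apply hphi. Qed.
Lemma phi_comp g g' x : phi (mulG g g') x = phi g (phi g' x).
Proof. apply hphi. Qed.
Lemma phi_e x : phi oneG x = x.
Proof. apply hphi. Qed.
Lemma phi_one g : phi g oneH = oneH.
Proof.
  assert (E : mulH (phi g oneH) (phi g oneH) = phi g oneH)
    by (rewrite <- phi_hom, (g_1l hH); reflexivity).
  rewrite <- (g_VK hH (phi g oneH) (phi g oneH)), E, (g_Vl hH). reflexivity.
Qed.
Lemma phi_inv g x : phi g (invH x) = invH (phi g x).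
Proof. apply (g_uniq hH). rewrite <- phi_hom, (g_Vr hH). apply phi_one. Qed.
Lemma phi_gV g x : phi g (phi (invG g) x) = x.
Proof. rewrite <- phi_comp, (g_Vr hG). apply phi_e. Qed.
Lemma phi_comm g x y : phi g (commH x y) = commH (phi g x) (phi g y).
Proof. unfold comm. rewrite !phi_hom, !phi_inv. reflexivity. Qed.

Lemma gen_phi g (S S' : H -> Prop) :
  (forall x, S x -> gen mulH invH oneH S' (phi g x)) ->
  forall x, gen mulH invH oneH S x -> gen mulH invH oneH S' (phi g x).
Proof.
  intro HS. apply gen_ind'; auto.
  - rewrite phi_one. apply gen_one.
  - intros. rewrite phi_hom. apply gen_mul; auto.
  - intros. rewrite phi_inv. apply gen_inv; auto.
Qed.

Ltac simp := repeat progress (unfold comm; rewrite ?phi_one, ?phi_e, ?phi_inv; gs hG; gs hH).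

Lemma Gam_one k : Gam k oneG.
Proof. destruct k; [exact I | apply gen_one]. Qed.
Lemma Gam_mul k x y : Gam k x -> Gam k y -> Gam k (mulG x y).
Proof. destruct k; [intros; exact I | apply gen_mul]. Qed.
Lemma Gam_inv k x : Gam k x -> Gam k (invG x).
Proof. destruct k; [intros; exact I | apply gen_inv]. Qed.
Lemma Gam_dec k x : Gam (S k) x -> Gam k x.
Proof.
  revert x; induction k; intros x Hx; [exact I|].
  simpl in *. unfold commsub in *. revert Hx. apply gen_mono.
  intros z [a [b [Ha [Hb E]]]]. exists a, b. auto.
Qed.
Lemma Gam_conj k g x : Gam k x -> Gam k (mulG (mulG g x) (invG g)).
Proof.
  destruct k; [intros; exact I|]. intro Hx.
  rewrite (conj_eq hG). apply gen_mul; [|exact Hx].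
  rewrite <- (comm_inv hG). apply gen_inv, gen_base.
  exists x, g. split; [apply Gam_dec; exact Hx | split; [exact I | reflexivity]].
Qed.
Lemma Der_one k : Der k oneG.
Proof. destruct k; [exact I | apply gen_one]. Qed.
Lemma Der_mul k x y : Der k x -> Der k y -> Der k (mulG x y).
Proof. destruct k; [intros; exact I | apply gen_mul]. Qed.
Lemma Der_inv k x : Der k x -> Der k (invG x).
Proof. destruct k; [intros; exact I | apply gen_inv]. Qed.

Lemma Lk_one k : Lk k oneH.
Proof. destruct k; [exact I | apply gen_one]. Qed.
Lemma Lk_mul k x y : Lk k x -> Lk k y -> Lk k (mulH x y).
Proof. destruct k; [intros; exact I | apply gen_mul]. Qed.
Lemma Lk_inv k x : Lk k x -> Lk k (invH x).
Proof. destruct k; [intros; exact I | apply gen_inv]. Qed.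
Lemma LK_K k g h : Gam k g -> Lk (S k) (tw g h).
Proof. intro. apply gen_base. left. apply gen_base. exists g, h. repeat split; auto. Qed.
Lemma LK_H k g h : Lk k h -> Lk (S k) (tw g h).
Proof. intro. apply gen_base. right. left. apply gen_base. exists g, h. repeat split; auto. Qed.
Lemma LK_C k x y : Lk k y -> Lk (S k) (commH x y).
Proof. intro. apply gen_base. right. right. apply gen_base. exists x, y. repeat split; auto. Qed.

Lemma Lk_dec k x : Lk (S k) x -> Lk k x.
Proof.
  revert x; induction k; intros x Hx; [exact I|].
  revert Hx. apply gen_sub. intros z [A|[A|A]].
  - apply gen_base. left. revert A. apply gen_mono.
    intros w [g [h [Hg [Hh E]]]]. exists g, h. split; [apply Gam_dec; auto | auto].
  - apply gen_base. right. left. revert A. apply gen_mono.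
    intros w [g [h [Hg [Hh E]]]]. exists g, h. repeat split; auto; try apply IHk; auto.
  - apply gen_base. right. right. revert A. apply gen_mono.
    intros w [g [h [Hg [Hh E]]]]. exists g, h. repeat split; auto; try apply IHk; auto.
Qed.
Lemma Lk_conj k x y : Lk k y -> Lk k (mulH (mulH x y) (invH x)).
Proof.
  destruct k; [intros; exact I|]. intro Hy.
  rewrite (conj_eq hH). apply Lk_mul; [|exact Hy].
  apply LK_C. apply Lk_dec. exact Hy.
Qed.
Lemma Lk_phi k g y : Lk k y -> Lk k (phi g y).
Proof.
  revert g y; induction k; intros g y Hy; [exact I|].
  revert Hy. apply gen_phi. intros z [A|[A|A]].
  - apply gen_base. left. revert A. apply gen_phi.
    intros w [x [h [Hx [_ E]]]]. subst w. apply gen_base.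
    exists (mulG (mulG g x) (invG g)), (phi g h).
    split; [apply Gam_conj; auto | split; [exact I|]].
    rewrite phi_hom, phi_inv, <- !phi_comp. simp. reflexivity.
  - apply gen_base. right. left. revert A. apply gen_phi.
    intros w [x [h [_ [Hh E]]]]. subst w.
    replace (phi g (tw x h)) with (mulH (tw (mulG g x) h) (invH (tw g h))).
    + apply gen_mul; [|apply gen_inv]; apply gen_base;
        [exists (mulG g x), h | exists g, h]; repeat split; auto.
    + rewrite phi_hom, phi_inv, <- phi_comp. simp. reflexivity.
  - apply gen_base. right. right. revert A. apply gen_phi.
    intros w [x [y0 [_ [Hy0 E]]]]. subst w. apply gen_base.
    exists (phi g x), (phi g y0). rewrite phi_comm. repeat split; auto; apply IHk; exact Hy0.
Qed.

Lemma Vk_one k : Vk k oneH.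
Proof. destruct k; [exact I | apply gen_one]. Qed.
Lemma Vk_mul k x y : Vk k x -> Vk k y -> Vk k (mulH x y).
Proof. destruct k; [intros; exact I | apply gen_mul]. Qed.
Lemma Vk_inv k x : Vk k x -> Vk k (invH x).
Proof. destruct k; [intros; exact I | apply gen_inv]. Qed.
Lemma VK_H k g h : Vk k h -> Vk (S k) (tw g h).
Proof. intro. apply gen_base. left. apply gen_base. exists g, h. repeat split; auto. Qed.
Lemma VK_C k x y : Vk k y -> Vk (S k) (commH x y).
Proof. intro. apply gen_base. right. apply gen_base. exists x, y. repeat split; auto. Qed.
Lemma Vk_dec k x : Vk (S k) x -> Vk k x.
Proof.
  revert x; induction k; intros x Hx; [exact I|].
  revert Hx. apply gen_sub. intros z [A|A].
  - apply gen_base. left. revert A. apply gen_mono.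
    intros w [g [h [Hg [Hh E]]]]. exists g, h. repeat split; auto; try apply IHk; auto.
  - apply gen_base. right. revert A. apply gen_mono.
    intros w [g [h [Hg [Hh E]]]]. exists g, h. repeat split; auto; try apply IHk; auto.
Qed.
Lemma Vk_conj k x y : Vk k y -> Vk k (mulH (mulH x y) (invH x)).
Proof.
  destruct k; [intros; exact I|]. intro Hy.
  rewrite (conj_eq hH). apply Vk_mul; [|exact Hy].
  apply VK_C. apply Vk_dec. exact Hy.
Qed.
Lemma Vk_phi k g y : Vk k y -> Vk k (phi g y).
Proof.
  revert g y; induction k; intros g y Hy; [exact I|].
  revert Hy. apply gen_phi. intros z [A|A].
  - apply gen_base. left. revert A. apply gen_phi.
    intros w [x [h [_ [Hh E]]]]. subst w.
    replace (phi g (tw x h)) with (mulH (tw (mulG g x) h) (invH (tw g h))).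
    + apply gen_mul; [|apply gen_inv]; apply gen_base;
        [exists (mulG g x), h | exists g, h]; repeat split; auto.
    + rewrite phi_hom, phi_inv, <- phi_comp. simp. reflexivity.
  - apply gen_base. right. revert A. apply gen_phi.
    intros w [x [y0 [_ [Hy0 E]]]]. subst w. apply gen_base.
    exists (phi g x), (phi g y0). rewrite phi_comm. repeat split; auto; apply IHk; exact Hy0.
Qed.

Lemma restr (P : H -> Prop) B : (forall g y, P y -> P (phi g y)) -> restricts phi B P.
Proof.
  intros HP g _. split; intros h Hh; [auto|].
  exists (phi (invG g) h). split; [auto | apply phi_gV].
Qed.

Lemma commS_eq h g h' g' : comm sdm sdi (h, g) (h', g') =
  (mulH (mulH (mulH h (phi g h')) (invH (phi (mulG (mulG g g') (invG g)) h)))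
     (invH (phi (commG g g') h')), commG g g').
Proof.
  unfold comm, sd_mul, sd_inv. simpl. rewrite <- !phi_comp, !phi_inv. reflexivity.
Qed.

Lemma key (N : H -> Prop) (N1 : N oneH) (Nm : forall x y, N x -> N y -> N (mulH x y))
  (Ni : forall x, N x -> N (invH x)) (Nc : forall x y, N y -> N (mulH (mulH x y) (invH x)))
  h g h' g' :
  N (tw g h') -> N (tw (mulG (mulG g g') (invG g)) h) -> N (tw (commG g g') h') ->
  N (commH h h') ->
  N (mulH (mulH (mulH h (phi g h')) (invH (phi (mulG (mulG g g') (invG g)) h)))
     (invH (phi (commG g g') h'))).
Proof.
  generalize (phi g h') as A. generalize (phi (mulG (mulG g g') (invG g)) h) as B.
  generalize (phi (commG g g') h') as C. intros C B A H1 H2 H3 H4.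
  replace (mulH (mulH (mulH h A) (invH B)) (invH C)) with
    (mulH (mulH (mulH (mulH (mulH h (mulH A (invH h'))) (invH h)) (commH h h'))
       (mulH (mulH h' (invH (mulH B (invH h)))) (invH h'))) (invH (mulH C (invH h')))).
  - apply Nm; [apply Nm; [apply Nm|]|]; auto.
  - unfold comm. gs hH. reflexivity.
Qed.


Local Notation lcsS := (lcs sdm sdi sde).
Local Notation derS := (derived sdm sdi sde).

Lemma HS_closed k (P : H -> Prop) :
  (forall z, P z -> lcsS (S k) (z, oneG)) ->
  forall z, gen mulH invH oneH P z -> lcsS (S k) (z, oneG).
Proof.
  intro HS. apply gen_ind'; auto.
  - apply gen_one.
  - intros x y Hx Hy. replace (mulH x y, oneG) with (sdm (x, oneG) (y, oneG)).
    + apply gen_mul; auto.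
    + unfold sd_mul; simpl. simp. reflexivity.
  - intros x Hx. replace (invH x, oneG) with (sdi (x, oneG)).
    + apply gen_inv; auto.
    + unfold sd_inv; simpl. simp. reflexivity.
Qed.

Lemma part1 k : forall p, lcsS k p <-> sdset (Lk k) (Gam k) p.
Proof.
  induction k; intro p.
  { simpl. unfold sdset. split; intros; [split; exact I | exact I]. }
  split.
  - intro Hp. revert p Hp. apply gen_ind'.
    + split; [apply Lk_one | apply Gam_one].
    + intros [h g] [h' g'] [A B] [C D]. split; cbn [fst snd] in *.
      * apply Lk_mul; auto. apply Lk_phi; auto.
      * apply Gam_mul; auto.
    + intros [h g] [A B]. split; cbn [fst snd] in *.
      * apply Lk_phi, Lk_inv; auto.
      * apply Gam_inv; auto.
    + intros z [[h g] [[h' g'] [Ha [_ E]]]]. subst z.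
      apply IHk in Ha. destruct Ha as [Ha1 Ha2]. simpl in Ha1, Ha2.
      rewrite commS_eq. split; cbn [fst snd].
      * apply key.
        -- apply Lk_one.
        -- apply Lk_mul.
        -- apply Lk_inv.
        -- apply Lk_conj.
        -- apply LK_K; auto.
        -- apply LK_H; auto.
        -- apply LK_K. apply Gam_dec. apply gen_base. exists g, g'. repeat split; auto.
        -- rewrite <- (comm_inv hH). apply Lk_inv. apply LK_C. auto.
      * apply gen_base. exists g, g'. repeat split; auto.
  - destruct p as [h g]. intros [Hh Hg]. simpl in Hh, Hg.
    replace (h, g) with (sdm (h, oneG) (oneH, g))
      by (unfold sd_mul; simpl; simp; reflexivity).
    apply gen_mul.
    + revert h Hh. apply HS_closed. intros z [A|[A|A]]; revert z A; apply HS_closed.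
      * intros z [x [h [Hx [_ E]]]]. subst z.
        replace (tw x h, oneG) with (comm sdm sdi (oneH, x) (h, oneG)).
        -- apply gen_base. exists (oneH, x), (h, oneG). repeat split; auto.
           apply IHk. split; [apply Lk_one | exact Hx].
        -- rewrite commS_eq. simp. reflexivity.
      * intros z [x [h [_ [Hh E]]]]. subst z.
        replace (tw x h, oneG) with (sdi (comm sdm sdi (h, oneG) (oneH, x))).
        -- apply gen_inv. apply gen_base. exists (h, oneG), (oneH, x). repeat split; auto.
           apply IHk. split; [exact Hh | apply Gam_one].
        -- rewrite commS_eq. unfold sd_inv. simpl. simp. reflexivity.
      * intros z [x [y [_ [Hy E]]]]. subst z.
        replace (commH x y, oneG) with (sdi (comm sdm sdi (y, oneG) (x, oneG))).
        -- apply gen_inv. apply gen_base. exists (y, oneG), (x, oneG). repeat split; auto.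
           apply IHk. split; [exact Hy | apply Gam_one].
        -- rewrite commS_eq. unfold sd_inv. simpl. simp. reflexivity.
    + revert g Hg. apply gen_ind'.
      * apply gen_one.
      * intros x y Hx Hy. replace (oneH, mulG x y) with (sdm (oneH, x) (oneH, y)).
        -- apply gen_mul; auto.
        -- unfold sd_mul; simpl. simp. reflexivity.
      * intros x Hx. replace (oneH, invG x) with (sdi (oneH, x)).
        -- apply gen_inv; auto.
        -- unfold sd_inv; simpl. simp. reflexivity.
      * intros z [a [b [Ha [_ E]]]]. subst z.
        replace (oneH, commG a b) with (comm sdm sdi (oneH, a) (oneH, b)).
        -- apply gen_base. exists (oneH, a), (oneH, b). repeat split; auto.
           apply IHk. split; [apply Lk_one | exact Ha].
        -- rewrite commS_eq. simp. reflexivity.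
Qed.

Lemma part2 k : forall p, derS k p -> sdset (Vk k) (Der k) p.
Proof.
  induction k; intro p.
  { intros; split; exact I. }
  intro Hp. revert p Hp. apply gen_ind'.
  + split; [apply Vk_one | apply Der_one].
  + intros [h g] [h' g'] [A B] [C D]. split; cbn [fst snd] in *.
    * apply Vk_mul; auto. apply Vk_phi; auto.
    * apply Der_mul; auto.
  + intros [h g] [A B]. split; cbn [fst snd] in *.
    * apply Vk_phi, Vk_inv; auto.
    * apply Der_inv; auto.
  + intros z [[h g] [[h' g'] [Ha [Hb E]]]]. subst z.
    apply IHk in Ha. destruct Ha as [Ha1 Ha2]. simpl in Ha1, Ha2.
    apply IHk in Hb. destruct Hb as [Hb1 Hb2]. simpl in Hb1, Hb2.
    rewrite commS_eq. split; cbn [fst snd].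
    * apply key.
      -- apply Vk_one.
      -- apply Vk_mul.
      -- apply Vk_inv.
      -- apply Vk_conj.
      -- apply VK_H; auto.
      -- apply VK_H; auto.
      -- apply VK_H; auto.
      -- rewrite <- (comm_inv hH). apply Vk_inv. apply VK_C. auto.
    * apply gen_base. exists g, g'. repeat split; auto.
Qed.

End Main.

Theorem theorem2 (G H : Type)
  (mulG : G -> G -> G) (invG : G -> G) (oneG : G)
  (mulH : H -> H -> H) (invH : H -> H) (oneH : H)
  (hG : is_group mulG invG oneG) (hH : is_group mulH invH oneH)
  (phi : G -> H -> H) (hphi : is_action mulG oneG mulH phi)
  (n : nat) (hn : 1 <= n) :
  restricts phi (lcs mulG invG oneG (n - 1))
    (Lseq mulG invG oneG mulH invH oneH phi (n - 1)) /\
  restricts phi (derived mulG invG oneG (n - 1))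
    (Vseq mulH invH oneH phi (n - 1)) /\
  (forall p : H * G,
     lcs (sd_mul mulG mulH phi) (sd_inv invG invH phi) (sd_one oneG oneH) (n - 1) p
     <-> sdset (Lseq mulG invG oneG mulH invH oneH phi (n - 1))
               (lcs mulG invG oneG (n - 1)) p) /\
  (forall p : H * G,
     derived (sd_mul mulG mulH phi) (sd_inv invG invH phi) (sd_one oneG oneH) (n - 1) p
     -> sdset (Vseq mulH invH oneH phi (n - 1)) (derived mulG invG oneG (n - 1)) p).
Proof.
  split; [|split; [|split]].
  - eapply restr; try eassumption; intros; eapply Lk_phi; eauto.
  - eapply restr; try eassumption; intros; eapply Vk_phi; eauto.
  - eapply part1; eauto.
  - eapply part2; eauto.
Qed.
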